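(* Let $n\geq 14$ and let $S$ be a Steiner quadruple system S$(3,4,n)$ on the point set $\mathbb{Z}_n$, and let $A,B$ be a partition of $\mathbb{Z}_n$ into subsets of sizes $3$ and $n-3$, respectively. If there exists a perpendicular array PA$_\lambda(4,n-3,n-3)$, then there exists a large set with multiplicity LS$(3,4,n;\mu)$, where $\mu=\lambda\binom{n-4}{3}\big/4$.
   Context: A Steiner system S$(t,k,n)$ is a pair $(Q,B)$ where $Q$ is an $n$-set and $B$ is a collection of $k$-subsets (blocks) of $Q$ such that every $t$-subset of $Q$ is contained in exactly one block. A large set with multiplicity $\mu$, LS$(t,k,n;\mu)$, is a family (the same system may occur more than once) of Steiner systems S$(t,k,n)$ on a common $n$-set $Q$ such that every $k$-subset of $Q$ is a block of exactly $\mu$ of the systems. A perpendicular array PA$_\lambda(k,\ell,m)$ is a $\lambda\binom{m}{k}\times \ell$ matrix with entries from an $m$-set such that each row has $\ell$ distinct entries and, in the submatrix formed by any $k$ columns, each $k$-subset of the $m$-set occurs (as the set of entries of a row) exactly $\lambda$ times. *)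

(* Defs.v *)
From mathcomp Require Import all_boot all_algebra.
Set Implicit Arguments. Unset Strict Implicit. Unset Printing Implicit Defensive.

Definition steiner_system (T : finType) (t k : nat) (B : {set {set T}}) : Prop :=
  (forall b, b \in B -> #|b| = k) /\
  (forall X : {set T}, #|X| = t -> #|[set b in B | X \subset b]| = 1).

(* A large set with multiplicity mu, LS(t,k,|T|;mu): a family (with repetitions
   allowed, hence a sequence) of Steiner systems S(t,k,|T|) on T such that every
   k-subset of T is a block of exactly mu of the systems. *)
Definition large_set (T : finType) (t k mu : nat) (F : seq {set {set T}}) : Prop :=
  (forall S, S \in F -> steiner_system t k S) /\
  (forall K : {set T}, #|K| = k -> count (fun S : {set {set T}} => K \in S) F = mu).

Definition perpendicular_array (lam k l m : nat) (M : 'M['I_m]_(lam * 'C(m, k), l)) : Prop :=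
  (forall i, injective (fun j => M i j)) /\
  (forall C : {set 'I_l}, #|C| = k ->
     forall K : {set 'I_m}, #|K| = k ->
       #|[set i | [set M i j | j in C] == K]| = lam).

(* Main.v *)
Require Import Defs.
From mathcomp Require Import all_boot all_algebra zify ring lra.
Set Implicit Arguments. Unset Strict Implicit. Unset Printing Implicit Defensive.
Import GRing.Theory Num.Theory.
Lemma swap_connect (T : finType) (U : {set T}) (h : {set T} -> int) j :
 (forall a b (F : {set T}), a \in U -> b \in U -> a != b -> F \subset U -> a \notin F -> b \notin F ->
     #|F| = j -> h (a |: F) = h (b |: F)) ->
 forall E E' : {set T}, E \subset U -> E' \subset U -> #|E| = j.+1 -> #|E'| = j.+1 -> h E = h E'.
Proof.
move=> H E E' sEU sE'U cE cE'.
suff: forall d E, #|E :\: E'| <= d -> E \subset U -> #|E| = j.+1 -> h E = h E'.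
  by move/(_ _ E (leqnn _)); apply.
elim=> [|d IH] {}E dE {}sEU {}cE.
  have sEE' : E \subset E'.
    by rewrite -setD_eq0 -cards_eq0; move: dE; rewrite leqn0.
  suff -> : E = E' by []. by apply/eqP; rewrite eqEcard sEE' cE cE' leqnn.
case: (set_0Vmem (E :\: E')) => [E0 | [a aE]].
  have sEE' : E \subset E' by rewrite -setD_eq0 E0.
  suff -> : E = E' by []. by apply/eqP; rewrite eqEcard sEE' cE cE' leqnn.
have cD : #|E' :\: E| = #|E :\: E'| by rewrite !cardsD cE cE' setIC.
have : 0 < #|E' :\: E| by rewrite cD; apply/card_gt0P; exists a.
case/card_gt0P=> b bE'.
move: aE bE'; rewrite !inE => /andP[aE' aE] /andP[bE bE'].
have aU : a \in U by apply: (subsetP sEU).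
have bU : b \in U by apply: (subsetP sE'U).
have ab : a != b by apply/eqP=> eab; move: aE'; rewrite eab bE'.
have -> : h E = h (a |: (E :\ a)) by rewrite setD1K.
rewrite (H a b (E :\ a)) //.
- apply: IH.
  + have: #|E :\: E'| = (#|((b |: (E :\ a)) :\: E')|).+1.
      rewrite (cardsD1 a (E :\: E')) !inE aE aE' /= add1n; congr (_.+1); apply: eq_card => x.
      rewrite !inE; case: (x =P b) => [->|]; first by rewrite bE' andbF.
      by move=> _ /=; case: (x != a); case: (x \in E'); case: (x \in E).
    by move=> e; move: dE; rewrite e ltnS.
  + by rewrite subUset sub1set bU /= (subset_trans (subsetDl _ _) sEU).
  + by rewrite cardsU1 !inE negb_and negbK bE orbT (cardsD1 a E) aE in cE *.
- by rewrite (subset_trans (subsetDl _ _) sEU).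
- by rewrite !inE eqxx.
- by rewrite !inE negb_and negbK bE orbT.
- by move: cE; rewrite (cardsD1 a E) aE; case.
Qed.

Local Open Scope ring_scope.

Lemma sum_add_point (T : finType) (K : {set T}) a j (h : {set T} -> int) : a \notin K ->
 \sum_(E : {set T} | (E \subset a |: K) && (#|E| == j.+1)%N) h E =
 \sum_(F : {set T} | (F \subset K) && (#|F| == j)%N) h (a |: F) + \sum_(E : {set T} | (E \subset K) && (#|E| == j.+1)%N) h E.
Proof.
move=> aK.
rewrite (bigID (fun E : {set T} => a \in E)) /=; congr (_ + _).
  rewrite (reindex_onto (fun F => a |: F) (fun E => E :\ a)) /=; last first.
    by move=> E /andP[_ aE]; rewrite setD1K.
  apply: eq_bigl => F.
  case: (boolP (a \in F)) => aF.
    have -> : (a |: F) :\ a == F = false.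
      by apply/negbTE/negP=> /eqP e; move: aF; rewrite -e !inE eqxx.
    by rewrite !andbF; apply/esym/negbTE/negP=> /andP[/subsetP sFK _]; move: aK; rewrite sFK.
  rewrite setU1K // eqxx andbT !inE eqxx andbT cardsU1 aF add1n eqSS.
  congr (_ && _); apply/idP/idP.
    move=> s; apply/subsetP=> x xF; have := subsetP s x; rewrite !inE xF orbT => /(_ isT).
    by case/orP=> // /eqP ex; move: aF; rewrite -ex xF.
  by move=> s; apply: setUS.
apply: eq_bigl => E; case: (boolP (a \in E)) => aE; rewrite ?andbF ?andbT.
  by apply/esym/negbTE/negP=> /andP[/subsetP sEK _]; move: aK; rewrite sEK.
congr (_ && _); apply/idP/idP.
  move=> s; apply/subsetP=> x xE; have := subsetP s x; rewrite !inE xE => /(_ isT).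
  by case/orP=> // /eqP ex; move: aE; rewrite -ex xE.
by move=> s; apply: (subset_trans s); apply: subsetUr.
Qed.
Lemma exists_subset (T : finType) (U : {set T}) r : (r <= #|U|)%N ->
  exists K : {set T}, K \subset U /\ #|K| = r.
Proof.
move=> le.
have : (0 < #|[set K : {set T} | K \subset U & #|K| == r]|)%N by rewrite cards_draws bin_gt0.
by case/card_gt0P=> K; rewrite inE => /andP[s /eqP c]; exists K.
Qed.



Lemma sum_const_sub (T : finType) (K : {set T}) j (x : int) :
  \sum_(F : {set T} | (F \subset K) && (#|F| == j)%N) x = x *+ 'C(#|K|, j).
Proof.
rewrite -cards_draws -sumr_const; apply: eq_bigl => F; by rewrite inE.
Qed.

Lemma upsum_const (T : finType) j : forall (U : {set T}) k (h : {set T} -> int) (c : int),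
  (j <= k)%N -> (2*j + k <= #|U|)%N ->
  (forall K : {set T}, K \subset U -> #|K| = k ->
     \sum_(E : {set T} | (E \subset K) && (#|E| == j)%N) h E = c) ->
  forall E E' : {set T}, E \subset U -> E' \subset U -> #|E| = j -> #|E'| = j -> h E = h E'.
Proof.
elim: j => [|j IH] U k h c ljk lU Hs E E' sEU sE'U cE cE'.
  move/eqP: cE; rewrite cards_eq0 => /eqP->.
  by move/eqP: cE'; rewrite cards_eq0 => /eqP->.
apply: (swap_connect (U:=U) (j:=j)) => // a b F aU bU ab sFU aF bF cF.
have cU' : #|U :\ a :\ b| = (#|U| - 2)%N.
  have := cardsD1 b (U :\ a); have := cardsD1 a U.
  by rewrite [b \in U :\ a]inE in_set1 (eq_sym b) ab aU bU /= => -> ->; rewrite !add1n subn2.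
set U' := U :\ a :\ b.
pose d (F : {set T}) := h (a |: F) - h (b |: F).
have sU'U : U' \subset U by rewrite /U' (subset_trans (subsetDl _ _)) // subsetDl.
have aU' : a \notin U' by rewrite !inE eqxx andbF.
have bU' : b \notin U' by rewrite !inE eqxx.
have Hd : forall K : {set T}, K \subset U' -> #|K| = k.-1 ->
    \sum_(F : {set T} | (F \subset K) && (#|F| == j)%N) d F = 0.
  move=> K sK cK.
  have aK : a \notin K by apply/negP=> /(subsetP sK); rewrite (negbTE aU').
  have bK : b \notin K by apply/negP=> /(subsetP sK); rewrite (negbTE bU').
  have sKU : K \subset U by apply: subset_trans sU'U.
  have Ha := Hs (a |: K); have Hb := Hs (b |: K).
  rewrite sum_add_point // in Ha; rewrite sum_add_point // in Hb.
  rewrite sumrB.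
  have e1 := Ha _ _; have e2 := Hb _ _.
  rewrite subUset sub1set aU sKU cardsU1 aK cK /= in e1.
  rewrite subUset sub1set bU sKU cardsU1 bK cK /= in e2.
  have kpos : (0 < k)%N by apply: leq_ltn_trans ljk.
  have ek : (1 + k.-1)%N = k by rewrite add1n prednK.
  move: (e1 isT ek) (e2 isT ek) => E1 E2.
  apply/eqP; rewrite subr_eq0; apply/eqP.
  by apply: (addIr (\sum_(E0 : {set T} | (E0 \subset K) && (#|E0| == j.+1)%N) h E0)); rewrite E1 E2.
have kpos : (0 < k)%N by apply: leq_ltn_trans ljk.
have Hc := IH U' k.-1 d 0 ltac:(by rewrite -ltnS prednK) ltac:(by move: lU ljk; rewrite cU'; clear; lia) Hd.
have [K0 [sK0 cK0]] : exists K0 : {set T}, K0 \subset U' /\ #|K0| = k.-1.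
  apply: exists_subset; move: lU ljk; rewrite cU'; clear; lia.
have sFU' : F \subset U'.
  apply/subsetP=> x xF; rewrite !inE (subsetP sFU x xF) andbT.
  by apply/andP; split; apply/eqP=> ex; [move: bF | move: aF]; rewrite -ex xF.
have := Hd K0 sK0 cK0.
rewrite (eq_bigr (fun _ => d F)); last first.
  move=> F' /andP[sF' /eqP cF']; apply: Hc => //; apply: subset_trans sF' sK0.
rewrite sum_const_sub cK0 => /eqP; rewrite mulrn_eq0 => /orP[|/eqP /subr0_eq] //.
move=> /eqP C0; have : (0 < 'C(k.-1, j))%N by rewrite bin_gt0 -ltnS prednK.
by rewrite C0.
Qed.

Lemma sumz (I : finType) (P : pred I) (F : I -> nat) :
  ((\sum_(i | P i) F i)%N)%:Z = \sum_(i | P i) (F i)%:Z.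
Proof. by rewrite -natz natr_sum; apply: eq_bigr => i _; rewrite natz. Qed.

Local Close Scope ring_scope.

Lemma card_sum (T : finType) (P : pred T) : #|[set x | P x]| = \sum_x (P x : nat).
Proof.
by rewrite -sum1_card big_mkcond; apply: eq_bigr => x _; rewrite inE; case: (P x).
Qed.

Lemma sum_pick (T : finType) (Q : pred T) (x0 : T) :
  \sum_x (Q x : nat) * (x == x0) = Q x0.
Proof.
rewrite (bigD1 x0) //= eqxx muln1 big1 ?addn0 // => x /negbTE ->; by rewrite muln0.
Qed.

Lemma imset_eq_pre (T : finType) (f : T -> T) (C K : {set T}) :
  injective f -> (f @: C == K) = (C == f @^-1: K).
Proof.
move=> inj; apply/eqP/eqP => [<-|->].
  by apply/setP=> x; rewrite inE mem_imset.
rewrite (can_imset_pre _ (invF_f inj)); apply/setP=> y; rewrite !inE f_invF //.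
Qed.

Lemma imset_sub_pre (T : finType) (f : T -> T) (D K : {set T}) :
  injective f -> (f @: D \subset K) = (D \subset f @^-1: K).
Proof.
move=> inj; apply/subsetP/subsetP => H x.
  by move=> xD; rewrite inE; apply: H; rewrite mem_imset.
by case/imsetP=> y yD ->; have := H y yD; rewrite inE.
Qed.

Section PA.
Variables (m N lam : nat) (pi : 'I_N -> 'I_m -> 'I_m).
Hypothesis pinj : forall i, injective (pi i).
Hypothesis pa : forall C K : {set 'I_m}, #|C| = 4 -> #|K| = 4 ->
   #|[set i | pi i @: C == K]| = lam.

Let g (D E : {set 'I_m}) := #|[set i | pi i @: D == E]|.

Lemma H_const (D K : {set 'I_m}) : #|K| = 4 ->
  #|[set i | pi i @: D \subset K]| =
  \sum_(C : {set 'I_m}) ((D \subset C) && (#|C| == 4) : nat) * lam.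
Proof.
move=> cK.
have e : forall i, (pi i @: D \subset K : nat) =
   \sum_(C : {set 'I_m}) ((D \subset C) && (#|C| == 4) : nat) * (pi i @: C == K).
  move=> i; rewrite (eq_bigr (fun C : {set 'I_m} => ((D \subset C) && (#|C| == 4) : nat) * (C == pi i @^-1: K))).
    by rewrite sum_pick imset_sub_pre // card_preimset // cK eqxx andbT.
  by move=> C _; rewrite imset_eq_pre.
rewrite card_sum (eq_bigr _ (fun i _ => e i)) exchange_big /=.
apply: eq_bigr => C _.
case: (boolP ((D \subset C) && (#|C| == 4))) => [/andP[_ /eqP cC]|_]; last first.
  by rewrite mul0n big1 // => i _; rewrite mul0n.
rewrite mul1n -(pa cC cK) card_sum; apply: eq_bigr => i _; by rewrite mul1n.
Qed.

Lemma H_split (D K : {set 'I_m}) j : #|D| = j ->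
  #|[set i | pi i @: D \subset K]| =
  \sum_(E : {set 'I_m} | (E \subset K) && (#|E| == j)) g D E.
Proof.
move=> cD.
have e : forall i, (pi i @: D \subset K : nat) =
   \sum_(E : {set 'I_m}) ((E \subset K) && (#|E| == j) : nat) * (E == pi i @: D).
  by move=> i; rewrite sum_pick card_imset // cD eqxx andbT.
rewrite card_sum (eq_bigr _ (fun i _ => e i)) exchange_big /= [RHS]big_mkcond /=.
apply: eq_bigr => E _.
case: ((E \subset K) && (#|E| == j)); last by rewrite big1 // => i _; rewrite mul0n.
rewrite /g card_sum; apply: eq_bigr => i _; by rewrite mul1n eq_sym.
Qed.

Lemma g_total (D : {set 'I_m}) j : #|D| = j ->
  \sum_(E : {set 'I_m} | #|E| == j) g D E = N.
Proof.
move=> cD.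
have e : forall i : 'I_N, 1 = \sum_(E : {set 'I_m}) (#|E| == j : nat) * (E == pi i @: D).
  by move=> i; rewrite sum_pick card_imset // cD eqxx.
rewrite -[RHS](card_ord N) -sum1_card (eq_bigr _ (fun i _ => e i)) exchange_big /= [LHS]big_mkcond /=.
apply: eq_bigr => E _.
case: (#|E| == j); last by rewrite big1 // => i _; rewrite mul0n.
rewrite /g card_sum; apply: eq_bigr => i _; by rewrite mul1n eq_sym.
Qed.

Lemma pa_derived j (D E : {set 'I_m}) : (2 * j + 4 <= m) -> j <= 4 -> #|D| = j -> #|E| = j ->
  'C(m, j) * g D E = N.
Proof.
move=> hm hj cD cE.
have Hc : forall E1 E2 : {set 'I_m}, #|E1| = j -> #|E2| = j -> g D E1 = g D E2.
  move=> E1 E2 c1 c2.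
  have := @upsum_const _ j [set: 'I_m] 4 (fun E => Posz (g D E))
     (Posz (\sum_(C : {set 'I_m}) ((D \subset C) && (#|C| == 4) : nat) * lam)) hj.
  rewrite cardsT card_ord => /(_ hm) H.
  have : Posz (g D E1) = Posz (g D E2).
    apply: H; rewrite ?subsetT //.
    by move=> K _ cK; rewrite -sumz -H_split // H_const.
  by case.
rewrite -(g_total cD) (eq_bigr (fun _ => g D E)); last by move=> E1 /eqP c1; apply: Hc.
rewrite [RHS](eq_bigl (fun E1 => E1 \in [set E1 : {set 'I_m} | #|E1| == j])); last first.
  by move=> E1; rewrite inE.
by rewrite sum_nat_const card_draws card_ord.
Qed.
End PA.

Local Open Scope ring_scope.
Fixpoint Pc (t : nat -> rat) (x y : nat) : rat :=
  match y with 0 => t x | y'.+1 => Pc t x y' - Pc t x.+1 y' end.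

Lemma arith (k lam g c : nat) (t : nat -> nat) x : (x <= 3)%N ->
 ('C(11 + k, 4 - x) * g = lam * 'C(11 + k, 4))%N ->
 (forall y, y <= 3 -> (4 - y) * t y = 'C(14 + k - y, 3 - y))%N ->
 (c%:R = Pc (fun y => (t y)%:R) x (3 - x) :> rat) ->
 (4 * (g * c) = lam * 'C(10 + k, 3))%N.
Proof.
move=> hx Hg Ht Hc.
have B4 : ('C(11 + k, 4) * 24 = (11 + k) * ((10 + k) * ((9 + k) * ((8 + k) * 1))))%N := bin_ffact _ _.
have B3 : ('C(10 + k, 3) * 6 = (10 + k) * ((9 + k) * ((8 + k) * 1)))%N := bin_ffact _ _.
have B3' : ('C(11 + k, 3) * 6 = (11 + k) * ((10 + k) * ((9 + k) * 1)))%N := bin_ffact _ _.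
have B2 : ('C(11 + k, 2) * 2 = (11 + k) * ((10 + k) * 1))%N := bin_ffact _ _.
have T3 : ('C(14 + k, 3) * 6 = (14 + k) * ((13 + k) * ((12 + k) * 1)))%N := bin_ffact _ _.
have T2 : ('C(13 + k, 2) * 2 = (13 + k) * ((12 + k) * 1))%N := bin_ffact _ _.
have t0 : (4 * t 0 = 'C(14 + k, 3))%N := Ht 0%N isT.
have t1 : (3 * t 1 = 'C(13 + k, 2))%N := Ht 1%N isT.
have t2 : (2 * t 2 = 'C(12 + k, 1))%N := Ht 2%N isT.
have t3 : (1 * t 3 = 'C(11 + k, 0))%N := Ht 3%N isT.
rewrite bin1 in t2; rewrite bin0 mul1n in t3.
have kp : 0 <= (k%:R : rat) by rewrite ler0n.
have C4p : (0 < 'C(11 + k, 4))%N by rewrite bin_gt0; lia.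
have C3p : (0 < 'C(11 + k, 3))%N by rewrite bin_gt0; lia.
have C2p : (0 < 'C(11 + k, 2))%N by rewrite bin_gt0; lia.
case: x hx Hg Hc => [|[|[|[|//]]]] _ Hg Hc.
- have Hg' : ('C(11 + k, 4) * g = lam * 'C(11 + k, 4))%N := Hg.
  have Hc' : (c%:R = (t 0)%:R - (t 1)%:R - ((t 1)%:R - (t 2)%:R) - ((t 1)%:R - (t 2)%:R - ((t 2)%:R - (t 3)%:R)) :> rat) := Hc.
  move: C4p C3p C2p B4 B3 B3' B2 T3 T2 t0 t1 t2 t3 Hg' Hc'; clear Hg Hc Ht.
  move: ('C(11 + k, 4)) ('C(11 + k, 3)) ('C(11 + k, 2)) ('C(10 + k, 3)) ('C(14 + k, 3)) ('C(13 + k, 2)) => C4 C3 C2 D3 E3 E2.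
  move=> C4p C3p C2p e4 d3 e3' e2' e3 e2 h0 h1 h2 h3 hg hc.
  apply/eqP; rewrite -(eqr_nat rat) !natrM; apply/eqP.
  move: e4 d3 e3' e2' e3 e2 h0 h1 h2 h3 hg => /(congr1 (fun z : nat => z%:R : rat)) e4
    /(congr1 (fun z : nat => z%:R : rat)) d3 
    /(congr1 (fun z : nat => z%:R : rat)) e3' /(congr1 (fun z : nat => z%:R : rat)) e2'
    /(congr1 (fun z : nat => z%:R : rat)) e3
    /(congr1 (fun z : nat => z%:R : rat)) e2 /(congr1 (fun z : nat => z%:R : rat)) h0
    /(congr1 (fun z : nat => z%:R : rat)) h1 /(congr1 (fun z : nat => z%:R : rat)) h2
    /(congr1 (fun z : nat => z%:R : rat)) h3 /(congr1 (fun z : nat => z%:R : rat)) hg.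
  rewrite ?natrM ?natrD in e4 d3 e3' e2' e3 e2 h0 h1 h2 h3 hg.
  have C4n0 : (C4%:R : rat) != 0 by rewrite pnatr_eq0 -lt0n.
  have C3n0 : (C3%:R : rat) != 0 by rewrite pnatr_eq0 -lt0n.
  have C2n0 : (C2%:R : rat) != 0 by rewrite pnatr_eq0 -lt0n.
  have et0 : (t 0)%:R = E3%:R / 4 :> rat by rewrite -h0; field.
  have et1 : (t 1)%:R = E2%:R / 3 :> rat by rewrite -h1; field.
  have et2 : (t 2)%:R = (12 + k%:R) / 2 :> rat by rewrite -h2; field.
  have eE3 : E3%:R = (14 + k%:R) * ((13 + k%:R) * ((12 + k%:R) * 1)) / 6 :> rat by rewrite -e3; field.
  have eE2 : E2%:R = (13 + k%:R) * ((12 + k%:R) * 1) / 2 :> rat by rewrite -e2; field.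
  have eD3 : D3%:R = (10 + k%:R) * ((9 + k%:R) * ((8 + k%:R) * 1)) / 6 :> rat by rewrite -d3; field.
  have eC4 : C4%:R = (11 + k%:R) * ((10 + k%:R) * ((9 + k%:R) * ((8 + k%:R) * 1))) / 24 :> rat by rewrite -e4; field.
  have eC3 : C3%:R = (11 + k%:R) * ((10 + k%:R) * ((9 + k%:R) * 1)) / 6 :> rat by rewrite -e3'; field.
  have eC2 : C2%:R = (11 + k%:R) * ((10 + k%:R) * 1) / 2 :> rat by rewrite -e2'; field.
  apply: (mulfI C4n0).
  have -> : C4%:R * (4 * (g%:R * c%:R)) = 4 * (C4%:R * g%:R) * c%:R :> rat by ring.
  rewrite hg hc ?et0 ?et1 ?et2 ?h3 ?eE3 ?eE2 eD3 eC4 ?eC3 ?eC2.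
  by field.
- have Hg' : ('C(11 + k, 3) * g = lam * 'C(11 + k, 4))%N := Hg.
  have Hc' : (c%:R = (t 1)%:R - (t 2)%:R - ((t 2)%:R - (t 3)%:R) :> rat) := Hc.
  move: C4p C3p C2p B4 B3 B3' B2 T3 T2 t0 t1 t2 t3 Hg' Hc'; clear Hg Hc Ht.
  move: ('C(11 + k, 4)) ('C(11 + k, 3)) ('C(11 + k, 2)) ('C(10 + k, 3)) ('C(14 + k, 3)) ('C(13 + k, 2)) => C4 C3 C2 D3 E3 E2.
  move=> C4p C3p C2p e4 d3 e3' e2' e3 e2 h0 h1 h2 h3 hg hc.
  apply/eqP; rewrite -(eqr_nat rat) !natrM; apply/eqP.
  move: e4 d3 e3' e2' e3 e2 h0 h1 h2 h3 hg => /(congr1 (fun z : nat => z%:R : rat)) e4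
    /(congr1 (fun z : nat => z%:R : rat)) d3 
    /(congr1 (fun z : nat => z%:R : rat)) e3' /(congr1 (fun z : nat => z%:R : rat)) e2'
    /(congr1 (fun z : nat => z%:R : rat)) e3
    /(congr1 (fun z : nat => z%:R : rat)) e2 /(congr1 (fun z : nat => z%:R : rat)) h0
    /(congr1 (fun z : nat => z%:R : rat)) h1 /(congr1 (fun z : nat => z%:R : rat)) h2
    /(congr1 (fun z : nat => z%:R : rat)) h3 /(congr1 (fun z : nat => z%:R : rat)) hg.
  rewrite ?natrM ?natrD in e4 d3 e3' e2' e3 e2 h0 h1 h2 h3 hg.
  have C4n0 : (C4%:R : rat) != 0 by rewrite pnatr_eq0 -lt0n.
  have C3n0 : (C3%:R : rat) != 0 by rewrite pnatr_eq0 -lt0n.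
  have C2n0 : (C2%:R : rat) != 0 by rewrite pnatr_eq0 -lt0n.
  have et0 : (t 0)%:R = E3%:R / 4 :> rat by rewrite -h0; field.
  have et1 : (t 1)%:R = E2%:R / 3 :> rat by rewrite -h1; field.
  have et2 : (t 2)%:R = (12 + k%:R) / 2 :> rat by rewrite -h2; field.
  have eE3 : E3%:R = (14 + k%:R) * ((13 + k%:R) * ((12 + k%:R) * 1)) / 6 :> rat by rewrite -e3; field.
  have eE2 : E2%:R = (13 + k%:R) * ((12 + k%:R) * 1) / 2 :> rat by rewrite -e2; field.
  have eD3 : D3%:R = (10 + k%:R) * ((9 + k%:R) * ((8 + k%:R) * 1)) / 6 :> rat by rewrite -d3; field.
  have eC4 : C4%:R = (11 + k%:R) * ((10 + k%:R) * ((9 + k%:R) * ((8 + k%:R) * 1))) / 24 :> rat by rewrite -e4; field.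
  have eC3 : C3%:R = (11 + k%:R) * ((10 + k%:R) * ((9 + k%:R) * 1)) / 6 :> rat by rewrite -e3'; field.
  have eC2 : C2%:R = (11 + k%:R) * ((10 + k%:R) * 1) / 2 :> rat by rewrite -e2'; field.
  apply: (mulfI C3n0).
  have -> : C3%:R * (4 * (g%:R * c%:R)) = 4 * (C3%:R * g%:R) * c%:R :> rat by ring.
  rewrite hg hc ?et0 ?et1 ?et2 ?h3 ?eE3 ?eE2 eD3 eC4 ?eC3 ?eC2.
  by field.
- have Hg' : ('C(11 + k, 2) * g = lam * 'C(11 + k, 4))%N := Hg.
  have Hc' : (c%:R = (t 2)%:R - (t 3)%:R :> rat) := Hc.
  move: C4p C3p C2p B4 B3 B3' B2 T3 T2 t0 t1 t2 t3 Hg' Hc'; clear Hg Hc Ht.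
  move: ('C(11 + k, 4)) ('C(11 + k, 3)) ('C(11 + k, 2)) ('C(10 + k, 3)) ('C(14 + k, 3)) ('C(13 + k, 2)) => C4 C3 C2 D3 E3 E2.
  move=> C4p C3p C2p e4 d3 e3' e2' e3 e2 h0 h1 h2 h3 hg hc.
  apply/eqP; rewrite -(eqr_nat rat) !natrM; apply/eqP.
  move: e4 d3 e3' e2' e3 e2 h0 h1 h2 h3 hg => /(congr1 (fun z : nat => z%:R : rat)) e4
    /(congr1 (fun z : nat => z%:R : rat)) d3 
    /(congr1 (fun z : nat => z%:R : rat)) e3' /(congr1 (fun z : nat => z%:R : rat)) e2'
    /(congr1 (fun z : nat => z%:R : rat)) e3
    /(congr1 (fun z : nat => z%:R : rat)) e2 /(congr1 (fun z : nat => z%:R : rat)) h0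
    /(congr1 (fun z : nat => z%:R : rat)) h1 /(congr1 (fun z : nat => z%:R : rat)) h2
    /(congr1 (fun z : nat => z%:R : rat)) h3 /(congr1 (fun z : nat => z%:R : rat)) hg.
  rewrite ?natrM ?natrD in e4 d3 e3' e2' e3 e2 h0 h1 h2 h3 hg.
  have C4n0 : (C4%:R : rat) != 0 by rewrite pnatr_eq0 -lt0n.
  have C3n0 : (C3%:R : rat) != 0 by rewrite pnatr_eq0 -lt0n.
  have C2n0 : (C2%:R : rat) != 0 by rewrite pnatr_eq0 -lt0n.
  have et0 : (t 0)%:R = E3%:R / 4 :> rat by rewrite -h0; field.
  have et1 : (t 1)%:R = E2%:R / 3 :> rat by rewrite -h1; field.
  have et2 : (t 2)%:R = (12 + k%:R) / 2 :> rat by rewrite -h2; field.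
  have eE3 : E3%:R = (14 + k%:R) * ((13 + k%:R) * ((12 + k%:R) * 1)) / 6 :> rat by rewrite -e3; field.
  have eE2 : E2%:R = (13 + k%:R) * ((12 + k%:R) * 1) / 2 :> rat by rewrite -e2; field.
  have eD3 : D3%:R = (10 + k%:R) * ((9 + k%:R) * ((8 + k%:R) * 1)) / 6 :> rat by rewrite -d3; field.
  have eC4 : C4%:R = (11 + k%:R) * ((10 + k%:R) * ((9 + k%:R) * ((8 + k%:R) * 1))) / 24 :> rat by rewrite -e4; field.
  have eC3 : C3%:R = (11 + k%:R) * ((10 + k%:R) * ((9 + k%:R) * 1)) / 6 :> rat by rewrite -e3'; field.
  have eC2 : C2%:R = (11 + k%:R) * ((10 + k%:R) * 1) / 2 :> rat by rewrite -e2'; field.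
  apply: (mulfI C2n0).
  have -> : C2%:R * (4 * (g%:R * c%:R)) = 4 * (C2%:R * g%:R) * c%:R :> rat by ring.
  rewrite hg hc ?et0 ?et1 ?et2 ?h3 ?eE3 ?eE2 eD3 eC4 ?eC3 ?eC2.
  by field.
- have Hg' : ((11 + k) * g = lam * 'C(11 + k, 4))%N by rewrite -Hg bin1.
  have Hc' : (c%:R = (t 3)%:R :> rat) := Hc.
  move: C4p C3p C2p B4 B3 B3' B2 T3 T2 t0 t1 t2 t3 Hg' Hc'; clear Hg Hc Ht.
  move: ('C(11 + k, 4)) ('C(11 + k, 3)) ('C(11 + k, 2)) ('C(10 + k, 3)) ('C(14 + k, 3)) ('C(13 + k, 2)) => C4 C3 C2 D3 E3 E2.
  move=> C4p C3p C2p e4 d3 e3' e2' e3 e2 h0 h1 h2 h3 hg hc.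
  apply/eqP; rewrite -(eqr_nat rat) !natrM; apply/eqP.
  move: e4 d3 e3' e2' e3 e2 h0 h1 h2 h3 hg => /(congr1 (fun z : nat => z%:R : rat)) e4
    /(congr1 (fun z : nat => z%:R : rat)) d3 
    /(congr1 (fun z : nat => z%:R : rat)) e3' /(congr1 (fun z : nat => z%:R : rat)) e2'
    /(congr1 (fun z : nat => z%:R : rat)) e3
    /(congr1 (fun z : nat => z%:R : rat)) e2 /(congr1 (fun z : nat => z%:R : rat)) h0
    /(congr1 (fun z : nat => z%:R : rat)) h1 /(congr1 (fun z : nat => z%:R : rat)) h2
    /(congr1 (fun z : nat => z%:R : rat)) h3 /(congr1 (fun z : nat => z%:R : rat)) hg.
  rewrite ?natrM ?natrD in e4 d3 e3' e2' e3 e2 h0 h1 h2 h3 hg.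
  have C4n0 : (C4%:R : rat) != 0 by rewrite pnatr_eq0 -lt0n.
  have C3n0 : (C3%:R : rat) != 0 by rewrite pnatr_eq0 -lt0n.
  have C2n0 : (C2%:R : rat) != 0 by rewrite pnatr_eq0 -lt0n.
  have et0 : (t 0)%:R = E3%:R / 4 :> rat by rewrite -h0; field.
  have et1 : (t 1)%:R = E2%:R / 3 :> rat by rewrite -h1; field.
  have et2 : (t 2)%:R = (12 + k%:R) / 2 :> rat by rewrite -h2; field.
  have eE3 : E3%:R = (14 + k%:R) * ((13 + k%:R) * ((12 + k%:R) * 1)) / 6 :> rat by rewrite -e3; field.
  have eE2 : E2%:R = (13 + k%:R) * ((12 + k%:R) * 1) / 2 :> rat by rewrite -e2; field.
  have eD3 : D3%:R = (10 + k%:R) * ((9 + k%:R) * ((8 + k%:R) * 1)) / 6 :> rat by rewrite -d3; field.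
  have eC4 : C4%:R = (11 + k%:R) * ((10 + k%:R) * ((9 + k%:R) * ((8 + k%:R) * 1))) / 24 :> rat by rewrite -e4; field.
  have eC3 : C3%:R = (11 + k%:R) * ((10 + k%:R) * ((9 + k%:R) * 1)) / 6 :> rat by rewrite -e3'; field.
  have eC2 : C2%:R = (11 + k%:R) * ((10 + k%:R) * 1) / 2 :> rat by rewrite -e2'; field.
  have Kn0 : (11 + k%:R : rat) != 0 by rewrite -natrD pnatr_eq0.
  apply: (mulfI Kn0).
  have -> : (11 + k%:R) * (4 * (g%:R * c%:R)) = 4 * ((11 + k%:R) * g%:R) * c%:R :> rat by ring.
  rewrite hg hc h3 eD3 eC4.
  by field.
Qed.

Local Close Scope ring_scope.

Lemma card_supsets (T : finType) (U D : {set T}) k : D \subset U -> #|D| <= k ->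
  #|[set C : {set T} | [&& D \subset C, C \subset U & #|C| == k]]| = 'C(#|U| - #|D|, k - #|D|).
Proof.
move=> sDU leDk.
rewrite -cardsDS // -cards_draws.
have -> : [set C : {set T} | [&& D \subset C, C \subset U & #|C| == k]] =
   (fun X => X :|: D) @: [set X : {set T} | X \subset U :\: D & #|X| == k - #|D|].
  apply/setP => C; rewrite inE; apply/idP/imsetP.
  - case/and3P=> sDC sCU /eqP cC; exists (C :\: D).
      by rewrite inE setSD //= cardsDS // cC.
    apply/setP=> x; rewrite !inE; case: (boolP (x \in D)) => xD; last by rewrite orbF.
    by rewrite (subsetP sDC).
  - case=> X; rewrite inE => /andP[sX /eqP cX] ->.
    have dXD : X :&: D = set0.
      apply/setP=> x; rewrite !inE; apply/negP=> /andP[xX xD].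
      by move: (subsetP sX x xX); rewrite inE xD.
    rewrite subsetUr /= subUset sDU andbT (subset_trans sX (subsetDl _ _)) /=.
    by rewrite cardsU dXD cards0 cX; apply/eqP; lia.
rewrite card_in_imset // => X Y; rewrite !inE => /andP[sX _] /andP[sY _] eXY.
apply/setP=> x; have := congr1 (fun Z : {set T} => x \in Z) eXY; rewrite /= !inE.
case: (boolP (x \in D)) => xD; last by rewrite !orbF.
have: x \notin X by apply/negP=> xX; move: (subsetP sX x xX); rewrite inE xD.
have: x \notin Y by apply/negP=> xX; move: (subsetP sY x xX); rewrite inE xD.
by move=> /negPf-> /negPf->.
Qed.

Lemma sqs_through (T : finType) (S : {set {set T}}) : steiner_system 3 4 S ->
  forall X : {set T}, #|X| <= 3 ->
  (4 - #|X|) * #|[set b in S | X \subset b]| = 'C(#|T| - #|X|, 3 - #|X|).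
Proof.
move=> [S4 S3] X hX.
pose F (Y b : {set T}) := (((X \subset Y) && (#|Y| == 3)) && ((b \in S) && (Y \subset b)) : nat).
have L1 : \sum_Y \sum_b F Y b = 'C(#|T| - #|X|, 3 - #|X|).
  rewrite -cardsT -card_supsets ?subsetT // card_sum; apply: eq_bigr => Y _.
  rewrite subsetT /F /=; case: (boolP ((X \subset Y) && (#|Y| == 3))) => [/andP[XY /eqP cY]|H].
    rewrite /= -(S3 Y cY) card_sum; apply: eq_bigr => b _.
    by [].
  by rewrite big1.
have L2 : \sum_b \sum_Y F Y b = (4 - #|X|) * #|[set b in S | X \subset b]|.
  rewrite card_sum big_distrr /=; apply: eq_bigr => b _.
  case bS: (b \in S); last first.
    by rewrite big1 ?muln0 // => Y _; rewrite /F bS andbF.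
  case Xb: (X \subset b); last first.
    rewrite big1 ?muln0 // => Y _; rewrite /F bS /=.
    case XY: (X \subset Y) => //=; case Yb: (Y \subset b); rewrite ?andbF //.
    by move: Xb; rewrite (subset_trans XY Yb).
  rewrite muln1.
  have -> : 4 - #|X| = 'C(#|b| - #|X|, 3 - #|X|).
    rewrite (S4 b bS); have -> : 4 - #|X| = (3 - #|X|).+1 by lia.
    by rewrite binSn.
  rewrite -card_supsets // card_sum; apply: eq_bigr => Y _.
  by rewrite /F bS; case: (X \subset Y); case: (Y \subset b); case: (#|Y| == 3).
by rewrite -L1 -L2 exchange_big.
Qed.

Lemma disj_add (T : finType) (b Y : {set T}) y :
  [disjoint b & y |: Y] = (y \notin b) && [disjoint b & Y].
Proof.
rewrite !disjoints_subset setCU subsetI; congr (_ && _); apply/idP/idP => [/subsetP H|yb].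
  by apply/negP => /H; rewrite !inE eqxx.
by apply/subsetP => x xb; rewrite !inE; apply/negP => /eqP exy; move: yb; rewrite -exy xb.
Qed.

Definition cnt (T : finType) (S : {set {set T}}) (X Y : {set T}) :=
  #|[set b in S | (X \subset b) && [disjoint b & Y]]|.

Lemma cnt_rec (T : finType) (S : {set {set T}}) X Y y :
  cnt S X (y |: Y) + cnt S (y |: X) Y = cnt S X Y.
Proof.
rewrite /cnt -(cardsID [set b : {set T} | y \in b] [set b in S | (X \subset b) && [disjoint b & Y]]) addnC.
congr (_ + _); apply: eq_card => b; rewrite !inE ?disj_add ?subUset ?sub1set.
  by case: (y \in b); case: (b \in S); case: (X \subset b); case: [disjoint b & Y].
by case: (y \in b); case: (b \in S); case: (X \subset b); case: [disjoint b & Y].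
Qed.

Local Open Scope ring_scope.

Definition tcount (T : finType) (x : nat) : nat := 'C(#|T| - x, 3 - x) %/ (4 - x).

Lemma cnt_val (T : finType) (S : {set {set T}}) : steiner_system 3 4 S ->
  forall y (X Y : {set T}), [disjoint X & Y] -> (#|X| + #|Y| <= 3)%N -> #|Y| = y ->
  (cnt S X Y)%:R = Pc (fun x => (tcount T x)%:R) #|X| y.
Proof.
move=> St; elim=> [|y IH] X Y dXY hXY cY.
  move/eqP: cY; rewrite cards_eq0 => /eqP Y0; subst Y.
  have hX : (#|X| <= 3)%N by move: hXY; rewrite cards0 addn0.
  rewrite /= /tcount -(sqs_through St hX) mulKn; last by rewrite subn_gt0; apply: leq_ltn_trans hX _.
  congr (_%:R); apply: eq_card => b; rewrite !inE.
  suff -> : [disjoint b & set0] by rewrite andbT.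
  by rewrite disjoints_subset setC0 subsetT.
have : (0 < #|Y|)%N by rewrite cY.
case/card_gt0P => z zY.
have eY : Y = z |: (Y :\ z) by rewrite setD1K.
have zX : z \notin X.
  apply/negP=> zX; move: dXY; rewrite disjoints_subset => /subsetP /(_ z zX).
  by rewrite inE zY.
have cY' : #|Y :\ z| = y by move: cY; rewrite (cardsD1 z Y) zY add1n; case.
have cYY : #|Y| = (#|Y :\ z|).+1 by rewrite (cardsD1 z Y) zY.
have R := cnt_rec S X (Y :\ z) z.
move/(congr1 (fun n : nat => n%:R : rat)): R; rewrite natrD -eY => R.
have -> : (cnt S X Y)%:R = (cnt S X (Y :\ z))%:R - (cnt S (z |: X) (Y :\ z))%:R :> rat.
  by rewrite -R addrK.
have dXY' : [disjoint X & Y :\ z].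
  move: dXY; rewrite !disjoints_subset => /subset_trans; apply.
  by rewrite setCS subsetDl.
rewrite (IH X (Y :\ z)) //; last by apply: leq_trans hXY; rewrite leq_add2l cYY.
rewrite (IH (z |: X) (Y :\ z)) //.
- by rewrite cardsU1 zX.
- by rewrite disjoint_sym disj_add !inE eqxx /= disjoint_sym.
- by rewrite cardsU1 zX add1n addSn -addnS -cYY.
Qed.

Local Close Scope ring_scope.

Section Construction.
Variables (n m : nat) (A B : {set 'I_n}).
Hypotheses (AB0 : A :&: B = set0) (ABT : A :|: B = setT) (cB : #|B| = m).
Variables (x0 : 'I_n) (x0B : x0 \in B).

Definition e (j : 'I_m) : 'I_n := enum_val (cast_ord (esym cB) j).
Definition einv (x : 'I_n) : 'I_m := cast_ord cB (enum_rank_in x0B x).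

Lemma e_in j : e j \in B.
Proof. exact: enum_valP. Qed.

Lemma einvK j : einv (e j) = j.
Proof. by apply: val_inj; rewrite /einv /e /= enum_valK_in. Qed.

Lemma e_inj : injective e.
Proof. exact: can_inj einvK. Qed.

Lemma eK x : x \in B -> e (einv x) = x.
Proof.
move=> xB; rewrite /e /einv.
have -> : cast_ord (esym cB) (cast_ord cB (enum_rank_in x0B x)) = enum_rank_in x0B x.
  by apply: val_inj.
by rewrite enum_rankK_in.
Qed.

Lemma inB x : (x \in B) = (x \notin A).
Proof.
have := congr1 (fun S : {set 'I_n} => x \in S) ABT; have := congr1 (fun S : {set 'I_n} => x \in S) AB0.
rewrite !inE; case: (x \in A); case: (x \in B) => //.
Qed.

Variable (p : 'I_m -> 'I_m).
Hypothesis pinj : injective p.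

Definition sgm (x : 'I_n) : 'I_n := if x \in B then e (p (einv x)) else x.

Lemma sgm_e j : sgm (e j) = e (p j).
Proof. by rewrite /sgm e_in einvK. Qed.

Lemma sgm_A x : x \in A -> sgm x = x.
Proof. by move=> xA; rewrite /sgm inB xA. Qed.

Lemma sgm_inj : injective sgm.
Proof.
move=> x y; rewrite /sgm.
case xB: (x \in B); case yB: (y \in B).
- by move/e_inj/pinj => /(congr1 e); rewrite !eK.
- by move=> ex; move: (e_in (p (einv x))); rewrite ex yB.
- by move=> ex; move: (e_in (p (einv y))); rewrite -ex xB.
- by [].
Qed.

Lemma mem_sgm_A x (b : {set 'I_n}) : x \in A -> (x \in sgm @: b) = (x \in b).
Proof.
move=> xA; rewrite -{1}(sgm_A xA) mem_imset //; exact: sgm_inj.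
Qed.

Lemma mem_sgm_e j (b : {set 'I_n}) : (e j \in sgm @: b) = (j \in p @: (e @^-1: b)).
Proof.
apply/imsetP/imsetP => [[y yb ey]|[i ib ->]].
  have yB : y \in B.
    case yB: (y \in B) => //; move: (e_in j); by rewrite ey /sgm yB /= yB.
  exists (einv y); first by rewrite inE eK.
  by apply: e_inj; rewrite ey /sgm yB.
by exists (e i); [rewrite inE in ib | rewrite sgm_e].
Qed.

Lemma sgm_eq (b K : {set 'I_n}) :
  (sgm @: b == K) = (b :&: A == K :&: A) && (p @: (e @^-1: b) == e @^-1: K).
Proof.
apply/eqP/andP => [<-|[/eqP H1 /eqP H2]].
  split; apply/eqP/setP => x; rewrite !inE.
    by case xA: (x \in A); rewrite ?andbT ?andbF // mem_sgm_A.
  by rewrite mem_sgm_e.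
apply/setP => x.
case xB: (x \in B).
  rewrite -(eK xB) mem_sgm_e H2 inE //.
have xA : x \in A by move: xB; rewrite inB; case: (x \in A).
rewrite mem_sgm_A //.
have := congr1 (fun S : {set 'I_n} => x \in S) H1; by rewrite /= !inE xA !andbT.
Qed.

Lemma card_epre (b : {set 'I_n}) : #|e @^-1: b| = #|b :&: B|.
Proof.
rewrite -(card_imset _ e_inj); apply: eq_card => x; rewrite !inE.
apply/imsetP/andP => [[j jb ->]|[xb xB]].
  by rewrite inE in jb; split => //; apply: e_in.
by exists (einv x); rewrite ?inE eK.
Qed.

End Construction.


Lemma sub_imset_pre (T : finType) (f : T -> T) (X b : {set T}) :
  injective f -> (X \subset f @: b) = (f @^-1: X \subset b).
Proof.
move=> inj; apply/subsetP/subsetP => H x.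
  by rewrite inE => /H; rewrite mem_imset.
move=> xX; have := H (invF inj x); rewrite inE f_invF // => /(_ xX) xb.
by rewrite -(f_invF inj x) mem_imset.
Qed.

Lemma steiner_image (T : finType) (S : {set {set T}}) (f : T -> T) :
  injective f -> steiner_system 3 4 S -> steiner_system 3 4 [set f @: b | b : {set T} in S].
Proof.
move=> inj [S4 S3]; split.
  by move=> K /imsetP [b bS ->]; rewrite card_imset // S4.
move=> X cX.
have -> : [set K in [set f @: b | b : {set T} in S] | X \subset K] =
          (fun b : {set T} => f @: b) @: [set b in S | f @^-1: X \subset b].
  apply/setP => K; rewrite inE; apply/andP/imsetP => [[/imsetP [b bS ->] sX]|[b]].
    by exists b => //; rewrite inE bS -sub_imset_pre.
  rewrite inE => /andP [bS sb] ->; split; first by apply/imsetP; exists b.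
  by rewrite sub_imset_pre.
by rewrite card_imset ?S3 ?card_preimset //; apply: imset_inj.
Qed.

Lemma mem_image_sys (T : finType) (S : {set {set T}}) (f : T -> T) (K : {set T}) :
  injective f -> (K \in [set f @: b | b : {set T} in S]) = (f @^-1: K \in S).
Proof.
move=> inj; apply/imsetP/idP => [[b bS ->]|H].
  suff -> : f @^-1: (f @: b) = b by [].
  by apply/esym/eqP; rewrite -imset_eq_pre.
by exists (f @^-1: K) => //; apply/esym/eqP; rewrite imset_eq_pre.
Qed.

Definition gcnt m N (pi : 'I_N -> 'I_m -> 'I_m) (D E : {set 'I_m}) :=
  #|[set i | pi i @: D == E]|.

Theorem theorem19 (n : nat) (S : {set {set 'I_n}}) (A B : {set 'I_n}) (lam : nat) :
  14 <= n ->
  steiner_system 3 4 S ->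
  A :&: B = set0 -> A :|: B = [set: 'I_n] -> #|A| = 3 -> #|B| = n - 3 ->
  (exists M : 'M['I_(n - 3)]_(lam * 'C(n - 3, 4), n - 3),
      perpendicular_array M) ->
  exists F : seq {set {set 'I_n}}, large_set 3 4 (lam * 'C(n - 4, 3) %/ 4) F.
Proof.
move=> hn St AB0 ABT cA cB [M [Minj Mpa]].
have [x0 x0B] : exists x0, x0 \in B.
  by apply/card_gt0P; rewrite cB subn_gt0; apply: leq_trans hn.
pose N := lam * 'C(n - 3, 4).
pose pi := fun (i : 'I_N) (j : 'I_(n - 3)) => (M i j : 'I_(n - 3)).
have pinj : forall i, injective (pi i) := Minj.
have pa : forall C K : {set 'I_(n - 3)}, #|C| = 4 -> #|K| = 4 ->
    #|[set i | pi i @: C == K]| = lam.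
  by move=> C K cC cK; apply: Mpa.
pose sg i := sgm cB x0B (pi i).
have sginj : forall i, injective (sg i) by move=> i; apply: sgm_inj.
pose Sys i := [set sg i @: b | b : {set 'I_n} in S].
exists [seq Sys i | i <- index_enum 'I_N]; split.
  by move=> S' /mapP [i _ ->]; apply: steiner_image.
move=> K cK.
rewrite count_map -sum1_count sum1dep_card.
have E1 : #|[set x | preim [eta Sys] (fun S0 : {set {set 'I_n}} => K \in S0) x]| =
   \sum_(b : {set 'I_n}) ((b \in S) && (b :&: A == K :&: A) : nat) *
      gcnt pi (e cB @^-1: b) (e cB @^-1: K).
  rewrite card_sum.
  rewrite (eq_bigr (fun i => \sum_(b : {set 'I_n}) (b \in S : nat) * (b == sg i @^-1: K))); last first.
    by move=> i _; rewrite sum_pick /= mem_image_sys.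
  rewrite exchange_big /=; apply: eq_bigr => b _.
  rewrite /gcnt card_sum big_distrr /=; apply: eq_bigr => i _.
  rewrite -imset_eq_pre // (sgm_eq AB0 ABT cB x0B (pinj i)).
  by case: (b \in S); case: (b :&: A == K :&: A).
rewrite E1 {E1}.
have inBx := inB AB0 ABT.
have cardB (X : {set 'I_n}) : #|X :&: A| + #|e cB @^-1: X| = #|X|.
  rewrite (card_epre cB x0B) -(cardsID A X); congr (_ + _); apply: eq_card => y.
  by rewrite !inE inBx andbC.
have xA : #|K :&: A| <= 3 by rewrite -cA; apply: subset_leq_card; apply: subsetIr.
move: (cardB K); rewrite cK.
move: xA; set x := #|K :&: A| => xA cKB.
have cEK : #|e cB @^-1: K| = 4 - x by rewrite -cKB addKn.
have hgN : forall D E : {set 'I_(n - 3)}, #|D| = 4 - x -> #|E| = 4 - x ->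
    'C(n - 3, 4 - x) * gcnt pi D E = N.
  move=> D E cD cE; case: (posnP x) => [x0'|xpos].
    rewrite x0' subn0 in cD cE *; by rewrite /gcnt pa // mulnC.
  apply: (pa_derived pinj pa _ _ cD cE); last by apply: leq_subr.
  by move: hn xpos; clear; lia.
pose gK := gcnt pi (e cB @^-1: K) (e cB @^-1: K).
have Cpos : 0 < 'C(n - 3, 4 - x) by rewrite bin_gt0; move: hn; clear; lia.
have E2 : forall b, b \in S -> b :&: A == K :&: A ->
    gcnt pi (e cB @^-1: b) (e cB @^-1: K) = gK.
  move=> b bS /eqP bA; apply/eqP; rewrite -(eqn_pmul2l Cpos) !hgN //.
  have := cardB b; rewrite bA -/x (St.1 b bS) => cb.
  by rewrite -cb addKn.
rewrite (eq_bigr (fun b => ((b \in S) && (b :&: A == K :&: A) : nat) * gK)); last first.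
  move=> b _; case: (boolP ((b \in S) && (b :&: A == K :&: A))) => [/andP[bS bA]|_].
    by rewrite E2.
  by rewrite !mul0n.
rewrite -big_distrl /= -card_sum.
have E3 : #|[set b | (b \in S) && (b :&: A == K :&: A)]| = cnt S (K :&: A) (A :\: K).
  rewrite /cnt; apply: eq_card => b; rewrite !inE; case: (b \in S) => //=.
  apply/eqP/andP => [bA|[sb db]].
    split; first by rewrite -bA subsetIl.
    rewrite disjoints_subset; apply/subsetP => y yb; rewrite !inE.
    case yA: (y \in A); rewrite ?andbF ?andbT //.
    have : y \in b :&: A by rewrite inE yb yA.
    by rewrite bA inE => /andP[-> _].
  apply/setP => y; rewrite !inE.
  case yA: (y \in A); rewrite ?andbF ?andbT //.
  apply/idP/idP => [yb|yK].
    move: db; rewrite disjoints_subset => /subsetP /(_ y yb).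
    by rewrite !inE yA andbT negbK.
  by apply: (subsetP sb); rewrite inE yK yA.
rewrite E3 {E3}.
have [k ek] : exists k, n = 14 + k by exists (n - 14); move: hn; clear; lia.
have e3 : n - 3 = 11 + k by rewrite ek.
have e4 : n - 4 = 10 + k by rewrite ek.
have Hg : 'C(11 + k, 4 - x) * gK = lam * 'C(11 + k, 4).
  by rewrite -e3 hgN.
have Ht : forall y, y <= 3 -> (4 - y) * tcount 'I_n y = 'C(14 + k - y, 3 - y).
  move=> y hy.
  have [X [_ cX]] : exists X : {set 'I_n}, X \subset setT /\ #|X| = y.
    by apply: exists_subset; rewrite cardsT card_ord; move: hn hy; clear; lia.
  have := sqs_through St (X := X); rewrite cX => /(_ hy) H.
  rewrite /tcount -H mulKn; last by rewrite subn_gt0; apply: leq_ltn_trans hy _.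
  by rewrite H card_ord ek.
have cAK : #|A :\: K| = 3 - x by rewrite cardsD cA setIC.
have dKA : [disjoint K :&: A & A :\: K].
  rewrite disjoints_subset; apply/subsetP => y; rewrite !inE.
  by case: (y \in K); case: (y \in A).
have Hc : ((cnt S (K :&: A) (A :\: K))%:R = Pc (fun y => (tcount 'I_n y)%:R) x (3 - x) :> rat)%R.
  apply: cnt_val => //; by rewrite cAK addnC subnK.
have := arith xA Hg Ht Hc.
rewrite e4 => <-.
by rewrite mulKn // mulnC.
Qed.
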